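(* Let $I$ be a squarefree monomial ideal in a polynomial ring $S$ over a field that is nearly a complete intersection (NCI). If $m_1$ and $m_2$ are two distinct minimal monomial generators of $I$, then $\gcd(m_1,m_2)$ has degree at most $1$.
   Context: An ideal is a complete intersection (CI) if it is generated by a regular sequence. The support of a monomial ideal is the set of variables appearing in at least one minimal monomial generator. For a squarefree monomial ideal $I$ and a variable $x$, $I(x=1)$ denotes the ideal generated by the monomials obtained from the minimal monomial generators of $I$ by setting $x = 1$. A squarefree monomial ideal $I$ is NCI if it is generated in degree at least two, is not a CI, and for each variable $x$ in the support of $I$, $I(x=1)$ is a CI. *)

(* Defs.v *)
From HB Require Import structures.
From mathcomp Require Import all_boot all_order all_algebra.
From mathcomp Require Export mpoly.
Set Implicit Arguments. Unset Strict Implicit. Unset Printing Implicit Defensive.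
Import GRing.Theory.
Local Open Scope ring_scope.

Section Defs.
Variables (k : fieldType) (n : nat).
Local Notation S := {mpoly k[n]}.

Definition ideal_gen (P : S -> Prop) : S -> Prop :=
  fun p => exists s : seq (S * S),
    (forall x, x \in s -> P x.2) /\ p = \sum_(x <- s) x.1 * x.2.

Definition ideal_seq (f : seq S) : S -> Prop :=
  ideal_gen (fun g => g \in f).

(* f = [:: f_0; ...; f_{r-1}] is a regular sequence in S: the quotient
   S/(f) is nonzero and each f_i is a nonzerodivisor on S/(f_0,...,f_{i-1}). *)
Definition regular_seq (f : seq S) : Prop :=
  ~ ideal_seq f 1 /\
  forall i : nat, (i < size f)%N ->
    forall g : S, ideal_seq (take i f) (nth 0 f i * g) -> ideal_seq (take i f) g.

Definition is_CI (J : S -> Prop) : Prop :=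
  exists f : seq S, regular_seq f /\ forall p, J p <-> ideal_seq f p.

Definition mdiv (a b : 'X_{1..n}) : bool := [forall i, (a i <= b i)%N].

Definition min_mon_gen (J : S -> Prop) (m : 'X_{1..n}) : Prop :=
  J 'X_[m] /\ forall m' : 'X_{1..n}, mdiv m' m -> J 'X_[m'] -> m' = m.

Definition squarefree_mon (m : 'X_{1..n}) : bool := [forall i, (m i <= 1)%N].

Definition mon_ideal (G : seq 'X_{1..n}) : S -> Prop :=
  ideal_gen (fun g => exists2 m, m \in G & g = 'X_[m]).

Definition in_support (J : S -> Prop) (i : 'I_n) : Prop :=
  exists m, min_mon_gen J m /\ (0 < m i)%N.

Definition mon_set1 (i : 'I_n) (m : 'X_{1..n}) : 'X_{1..n} :=
  [multinom (if j == i then 0%N else m j) | j < n].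

(* I(x_i = 1): generated by the minimal monomial generators of J with x_i := 1 *)
Definition ideal_set1 (J : S -> Prop) (i : 'I_n) : S -> Prop :=
  ideal_gen (fun g => exists2 m, min_mon_gen J m & g = 'X_[mon_set1 i m]).

Definition is_NCI (J : S -> Prop) : Prop :=
  [/\ forall m, min_mon_gen J m -> (2 <= mdeg m)%N,
      ~ is_CI J &
      forall i, in_support J i -> is_CI (ideal_set1 J i)].

Definition gcd_deg (a b : 'X_{1..n}) : nat := (\sum_(i < n) minn (a i) (b i))%N.

End Defs.

(* Main.v *)
Require Import Defs.
From mathcomp Require Import all_boot all_algebra.
From mathcomp Require Import mpoly.
From mathcomp Require Import zify.
Set Implicit Arguments. Unset Strict Implicit. Unset Printing Implicit Defensive.
Import GRing.Theory.
Local Open Scope ring_scope.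

Section Ideals.
Variables (k : fieldType) (n : nat).
Local Notation S := {mpoly k[n]}.
Implicit Types (P Q : S -> Prop).

Lemma ig0 P : ideal_gen P 0.
Proof. by exists [::]; rewrite big_nil. Qed.

Lemma igD P p q : ideal_gen P p -> ideal_gen P q -> ideal_gen P (p + q).
Proof.
move=> [s [Hs ->]] [t [Ht ->]]; exists (s ++ t); split; last by rewrite big_cat.
by move=> x; rewrite mem_cat => /orP[/Hs|/Ht].
Qed.

Lemma igM P a p : ideal_gen P p -> ideal_gen P (a * p).
Proof.
move=> [s [Hs ->]]; exists [seq (a * x.1, x.2) | x <- s]; split.
  by move=> x /mapP[y /Hs H ->].
by rewrite big_map mulr_sumr; apply: eq_bigr => x _; rewrite mulrA.
Qed.

Lemma igN P p : ideal_gen P p -> ideal_gen P (- p).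
Proof. by move=> H; rewrite -mulN1r; apply: igM. Qed.

Lemma igB P p q : ideal_gen P p -> ideal_gen P q -> ideal_gen P (p - q).
Proof. by move=> Hp Hq; apply: igD => //; apply: igN. Qed.

Lemma igG P g : P g -> ideal_gen P g.
Proof.
move=> H; exists [:: (1, g)]; split; first by move=> x; rewrite inE => /eqP->.
by rewrite big_seq1 mul1r.
Qed.

Lemma igsum P (I : eqType) (r : seq I) (F : I -> S) :
  (forall i, i \in r -> ideal_gen P (F i)) -> ideal_gen P (\sum_(i <- r) F i).
Proof.
elim: r => [|x r IH] H; rewrite ?big_nil ?big_cons; first exact: ig0.
apply: igD; first by apply: H; rewrite inE eqxx.
by apply: IH => i Hi; apply: H; rewrite inE Hi orbT.
Qed.

Lemma ig_sub P Q p : (forall g, P g -> ideal_gen Q g) -> ideal_gen P p -> ideal_gen Q p.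
Proof.
move=> H [s [Hs ->]]; apply: igsum => x Hx; apply: igM; exact: H _ (Hs _ Hx).
Qed.

Lemma ig_ext P Q p : (forall g, P g <-> Q g) -> ideal_gen P p <-> ideal_gen Q p.
Proof.
by move=> H; split; apply: ig_sub => g Hg; apply: igG; apply/H.
Qed.

Lemma ig_nat (F : nat -> S) m p :
  ideal_gen (fun g => exists2 i, (i < m)%N & g = F i) p <->
  exists c : nat -> S, p = \sum_(i < m) c i * F i.
Proof.
split.
  move=> [s [Hs ->]]; elim: s Hs => [|x s IH] Hs.
    by exists (fun _ => 0); rewrite big_nil big1 // => i _; rewrite mul0r.
  have [c Hc] : exists c : nat -> S, \sum_(y <- s) y.1 * y.2 = \sum_(i < m) c i * F i.
    by apply: IH => y Hy; apply: Hs; rewrite inE Hy orbT.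
  have [j jm Hj] := Hs x (mem_head _ _).
  exists (fun i => c i + (if i == j then x.1 else 0)).
  rewrite big_cons Hc addrC.
  apply/esym; under eq_bigr => i _ do rewrite mulrDl.
  rewrite big_split /=; congr (_ + _); apply/esym.
  rewrite (bigD1 (Ordinal jm)) //= eqxx big1 ?addr0 ?Hj // => i /eqP Hi.
  case: eqP => [Eij|_]; last by rewrite mul0r.
  by exfalso; apply: Hi; apply: val_inj.
move=> [c ->]; exists [seq (c (val i), F (val i)) | i <- enum 'I_m]; split.
  by move=> x /mapP[i _ ->]; exists (val i); [exact: ltn_ord|].
by rewrite big_map big_enum.
Qed.

Lemma ideal_seqP (f : seq S) p :
  ideal_seq f p <-> exists c : nat -> S, p = \sum_(i < size f) c i * f`_i.
Proof.
rewrite /ideal_seq -ig_nat; apply: ig_ext => g; split.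
  by move=> /(nthP 0)[i Hi <-]; exists i.
by move=> [i Hi ->]; apply: mem_nth.
Qed.


Lemma mdivE (a b : 'X_{1..n}) : mdiv a b = (a <= b)%MM.
Proof. by apply/forallP/mnm_lepP. Qed.

Lemma submm' (m : 'X_{1..n}) : (m - m)%MM = 0%MM.
Proof. by apply/mnmP => i; rewrite !mnmE subnn. Qed.

Lemma lepm_anti (a b : 'X_{1..n}) : (a <= b)%MM -> (b <= a)%MM -> a = b.
Proof.
move=> /mnm_lepP H1 /mnm_lepP H2; apply/mnmP => i.
by apply/eqP; rewrite eqn_leq H1 H2.
Qed.

Lemma mcoeffMXg (p : S) (w m : 'X_{1..n}) :
  (p * 'X_[w])@_m = if (w <= m)%MM then p@_(m - w) else 0.
Proof.
case: ifP => H; first by rewrite -{1}(submK H) addmC mcoeffMX.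
apply: memN_msupp_eq0; apply/negP.
rewrite (perm_mem (msuppMX p w)) => /mapP[m' _ Em].
by rewrite Em lem_addr in H.
Qed.

Definition JW (Wp : 'X_{1..n} -> Prop) : S -> Prop :=
  ideal_gen (fun g => exists2 w, Wp w & g = 'X_[w]).

Lemma mon_mem (Wp : 'X_{1..n} -> Prop) w m : Wp w -> (w <= m)%MM -> JW Wp 'X_[m].
Proof.
move=> Hw Hwm; rewrite -(submK Hwm) mpolyXD; apply: igM; apply: igG.
by exists w.
Qed.

Lemma mon_memP (Wp : 'X_{1..n} -> Prop) m : JW Wp 'X_[m] -> exists2 w, Wp w & (w <= m)%MM.
Proof.
move=> [s [Hs E]].
have : (\sum_(x <- s) x.1 * x.2)@_m != 0 by rewrite -E mcoeffX eqxx oner_neq0.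
elim: s Hs {E} => [|x s IH] Hs; first by rewrite big_nil mcoeff0 eqxx.
rewrite big_cons mcoeffD.
have [w Hw Ex] := Hs x (mem_head _ _).
case Hwm : (w <= m)%MM; first by move=> _; exists w.
rewrite Ex mcoeffMXg Hwm add0r; apply: IH => y Hy.
by apply: Hs; rewrite inE Hy orbT.
Qed.

Lemma fin_choice (T : Type) (x0 : T) (Q : nat -> T -> Prop) r :
  (forall i, (i < r)%N -> exists x, Q i x) ->
  exists F : nat -> T, forall i, (i < r)%N -> Q i (F i).
Proof.
elim: r => [|r IH] H; first by exists (fun _ => x0).
have [F HF] : exists F : nat -> T, forall i, (i < r)%N -> Q i (F i).
  by apply: IH => i Hi; apply: H; apply: ltnW.
have [x Hx] := H r (ltnSn r).
exists (fun i => if i == r then x else F i) => i.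
rewrite ltnS leq_eqVlt => /orP[/eqP->|Hi]; first by rewrite eqxx.
by rewrite (ltn_eqF Hi); apply: HF.
Qed.

Lemma ideal_seq_take (f : seq S) m p : (m <= size f)%N ->
  ideal_seq (take m f) p <-> exists c : nat -> S, p = \sum_(i < m) c i * f`_i.
Proof.
move=> Hm; rewrite ideal_seqP size_takel //.
have E : forall c : nat -> S, \sum_(i < m) c i * (take m f)`_i = \sum_(i < m) c i * f`_i.
  by move=> c; apply: eq_bigr => i _; rewrite nth_take.
by split => -[c ->]; exists c; rewrite E.
Qed.

Lemma ideal_take_mono (f : seq S) m m' p : (m <= m')%N ->
  ideal_seq (take m f) p -> ideal_seq (take m' f) p.
Proof.
move=> Hm; apply: ig_sub => g Hg; apply: igG.
by rewrite -(take_takel f Hm) in Hg; apply: mem_take Hg.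
Qed.

Lemma syz (f : seq S) :
  (forall i, (i < size f)%N -> forall g,
      ideal_seq (take i f) (f`_i * g) -> ideal_seq (take i f) g) ->
  forall m, (m <= size f)%N -> forall c : nat -> S,
  \sum_(i < m) c i * f`_i = 0 -> forall i, (i < m)%N -> ideal_seq (take m f) (c i).
Proof.
move=> Hreg; elim=> [|m IH] Hm c Hc i Hi; first by [].
rewrite big_ord_recr /= in Hc.
have Hm' : (m <= size f)%N by apply: ltnW.
have Hcm : ideal_seq (take m f) (c m).
  apply: (Hreg m Hm); rewrite mulrC.
  have -> : c m * f`_m = - \sum_(i < m) c i * f`_i.
    by apply/eqP; rewrite -addr_eq0 addrC Hc.
  by apply: igN; apply/(@ideal_seq_take f m _ Hm'); exists c.
have [d Hd] := (@ideal_seq_take f m _ Hm').1 Hcm.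
have Hfm : ideal_seq (take m.+1 f) f`_m.
  apply: igG; have <- : (take m.+1 f)`_m = f`_m by rewrite nth_take.
  by apply: mem_nth; rewrite size_takel.
have Hc' : \sum_(i < m) (c i + d i * f`_m) * f`_i = 0.
  rewrite (eq_bigr (fun j : 'I_m => c j * f`_j + d j * f`_m * f`_j)); last first.
    by move=> j _; rewrite mulrDl.
  rewrite big_split /= -[in RHS]Hc; congr (_ + _).
  rewrite Hd mulr_suml; apply: eq_bigr => j _.
  by rewrite -!mulrA [f`_m * _]mulrC.
move: Hi; rewrite ltnS leq_eqVlt => /orP[/eqP->|Hi].
  exact: ideal_take_mono Hcm.
have := IH Hm' (fun j => c j + d j * f`_m) Hc' i Hi => /(ideal_take_mono (leqnSn m)) H.
have -> : c i = (c i + d i * f`_m) - d i * f`_m by rewrite addrK.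
by apply: igB => //; apply: igM.
Qed.


Lemma ev0M (p q : S) : (p * q)@_0 = p@_0 * q@_0.
Proof. exact: rmorphM. Qed.

Lemma step1 (W : seq 'X_{1..n}) (f : seq S) : uniq W ->
  (forall a b, a \in W -> b \in W -> (a <= b)%MM -> a = b) ->
  (forall p, JW (fun w => w \in W) p <-> ideal_seq f p) -> (size W <= size f)%N.
Proof.
move=> uW anti HJ.
pose X (l : nat) : S := 'X_[nth 0%MM W l].
have JWP : forall p, JW (fun w => w \in W) p <->
    exists c : nat -> S, p = \sum_(l < size W) c l * X l.
  move=> p; rewrite /JW -ig_nat; apply: ig_ext => g; split.
    by move=> [w /(nthP 0%MM)[l Hl <-] ->]; exists l.
  by move=> [l Hl ->]; exists (nth 0%MM W l) => //; apply: mem_nth.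
have [a Ha] : exists a : nat -> nat -> S, forall i, (i < size f)%N ->
    f`_i = \sum_(l < size W) a i l * X l.
  apply: (@fin_choice _ (fun _ => 0) (fun i (x : nat -> S) => f`_i = \sum_(l < size W) x l * X l)) => i Hi; apply/JWP; apply/HJ.
  by apply: igG; apply: mem_nth.
have [b Hb] : exists b : nat -> nat -> S, forall l, (l < size W)%N ->
    X l = \sum_(i < size f) b l i * f`_i.
  apply: (@fin_choice _ (fun _ => 0) (fun l (x : nat -> S) => X l = \sum_(i < size f) x i * f`_i)) => l Hl; apply/ideal_seqP; apply/HJ.
  by rewrite /mon_ideal; apply: igG; exists (nth 0%MM W l) => //; apply: mem_nth.
pose M1 : 'M[k]_(size W, size f) := \matrix_(l, i) (b l i)@_0.
pose M2 : 'M[k]_(size f, size W) := \matrix_(i, l) (a i l)@_0.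
have HM : M1 *m M2 = 1%:M.
  apply/matrixP => l l'; rewrite !mxE.
  have E : X l = \sum_(l'' < size W) (\sum_(i < size f) b l i * a i l'') * X l''.
    rewrite (Hb l (ltn_ord l)).
    rewrite (eq_bigr (fun i : 'I_(size f) => \sum_(l'' < size W) b l i * (a i l'' * X l''))); last first.
      by move=> i _; rewrite (Ha i (ltn_ord i)) mulr_sumr.
    rewrite exchange_big /=; apply: eq_bigr => l'' _; rewrite mulr_suml.
    by apply: eq_bigr => i _; rewrite mulrA.
  have := congr1 (mcoeff (nth 0%MM W l')) E.
  rewrite /X mcoeffX raddf_sum /= (bigD1 l') //= mcoeffMXg lepm_refl submm'.
  rewrite [X in _ + X]big1 ?addr0; last first.
    move=> l'' Hl''; rewrite mcoeffMXg; case: ifP => // H.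
    have := anti _ _ (mem_nth 0%MM (ltn_ord l'')) (mem_nth 0%MM (ltn_ord l')) H.
    move/eqP; rewrite nth_uniq // => /eqP Heq.
    by exfalso; move/eqP: Hl''; apply; apply: val_inj.
  rewrite nth_uniq // => ->.
  rewrite raddf_sum; apply: eq_bigr => i _; rewrite /M1 /M2 !mxE; exact: (esym (ev0M _ _)).
rewrite -[Y in (Y <= _)%N](mxrank1 k (size W)) -HM.
exact: leq_trans (mxrankM_maxr _ _) (rank_leq_row _).
Qed.


Definition mstar (P : {set 'I_n}) : 'X_{1..n} := [multinom (j \notin P : nat) | j < n].

Lemma step2 (W : seq 'X_{1..n}) (f : seq S) (P : {set 'I_n}) :
  (forall i, (i < size f)%N -> forall g,
      ideal_seq (take i f) (f`_i * g) -> ideal_seq (take i f) g) ->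
  (forall p, JW (fun w => w \in W) p <-> ideal_seq f p) ->
  (forall w, w \in W -> exists2 j, j \in P & (0 < w j)%N) ->
  (forall j, j \in P -> exists2 w, w \in W & (w <= U_(j) + mstar P)%MM) ->
  (size f <= #|P|)%N.
Proof.
move=> Hreg HJ Hcov Hmin.
pose sX : seq S := [seq 'X_i | i <- enum P].
have HsX : size sX = #|P| by rewrite size_map cardE.
pose v : 'I_n -> k := fun i => if i \in P then 0 else 1.
pose psi := meval v.
have psiX : forall g, g \in sX -> psi g = 0.
  by move=> g /mapP[i Hi ->]; rewrite /psi mevalXU /v -mem_enum Hi.
have psiI : forall p, ideal_seq sX p -> psi p = 0.
  move=> p [s [Hs ->]]; rewrite /psi (big_morph _ (mevalD v) (meval0 v)) big1_seq // => x /andP[_ Hx].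
  by rewrite mevalM (psiX _ (Hs _ Hx) : meval v _ = 0) mulr0.
have JsX : forall p, JW (fun w => w \in W) p -> ideal_seq sX p.
  move=> p; apply: ig_sub => g [w Hw ->].
  have [j Hj Hwj] := Hcov w Hw.
  have Hle : (U_(j) <= w)%MM.
    by apply/mnm_lepP => i; rewrite mnm1E; case: eqP => [<-|].
  rewrite -(submK Hle) mpolyXD; apply: igM; apply: igG.
  by apply: map_f; rewrite mem_enum.
have psiJ : forall p, ideal_seq f p -> psi p = 0.
  by move=> p /HJ /JsX /psiI.
pose c : S := 'X_[mstar P].
have psic : psi c = 1.
  rewrite /psi /c mevalX big1 // => i _; rewrite /v mnmE.
  by case: (i \in P); rewrite ?expr0 ?expr1.
have [a Ha] : exists a : nat -> nat -> S, forall i, (i < size f)%N ->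
    f`_i = \sum_(j < size sX) a i j * sX`_j.
  apply: (@fin_choice _ (fun _ => 0)
     (fun i (x : nat -> S) => f`_i = \sum_(j < size sX) x j * sX`_j)) => i Hi.
  apply/ideal_seqP; apply: JsX; apply/HJ; apply: igG; exact: mem_nth.
have [b Hb] : exists b : nat -> nat -> S, forall j, (j < size sX)%N ->
    sX`_j * c = \sum_(l < size f) b j l * f`_l.
  apply: (@fin_choice _ (fun _ => 0)
     (fun j (x : nat -> S) => sX`_j * c = \sum_(l < size f) x l * f`_l)) => j Hj.
  apply/ideal_seqP; apply/HJ.
  have /mapP[e He ->] := mem_nth 0 Hj.
  rewrite mem_enum in He; have [w Hw Hwle] := Hmin e He.
  by rewrite /c -mpolyXD; apply: (mon_mem Hw Hwle).
pose A : 'M[k]_(size f, size sX) := \matrix_(i, j) psi (a i j).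
pose B : 'M[k]_(size sX, size f) := \matrix_(j, l) psi (b j l).
have HM : A *m B = 1%:M.
  apply/matrixP => i l; rewrite !mxE.
  pose co := fun l : nat => c * (i == l :> nat)%:R - \sum_(j < size sX) a i j * b j l.
  have E2 : \sum_(l < size f) (\sum_(j < size sX) a i j * b j l) * f`_l = c * f`_i.
    rewrite (eq_bigr (fun l : 'I_(size f) => \sum_(j < size sX) a i j * (b j l * f`_l))); last first.
      by move=> l' _; rewrite mulr_suml; apply: eq_bigr => j _; rewrite mulrA.
    rewrite exchange_big /= (Ha i (ltn_ord i)) mulr_sumr; apply: eq_bigr => j _.
    by rewrite -mulr_sumr -(Hb j (ltn_ord j)) [c * _]mulrC -mulrA.
  have Hco : \sum_(l' < size f) co l' * f`_l' = 0.
    rewrite (eq_bigr (fun l' : 'I_(size f) => c * (i == l' :> nat)%:R * f`_l' -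
       (\sum_(j < size sX) a i j * b j l') * f`_l')); last by move=> l' _; rewrite mulrBl.
    rewrite sumrB E2 (bigD1 i) //= eqxx mulr1 big1 ?addr0 ?subrr // => l' Hl'.
    have -> : (i == l' :> nat) = false by apply/negbTE; rewrite eq_sym; exact: Hl'.
    by rewrite mulr0 mul0r.
  have := syz Hreg (leqnn _) Hco (ltn_ord l); rewrite take_size => /psiJ.
  rewrite /co /psi mevalB mevalM (psic : meval v c = 1) mul1r mevalMn meval1 (big_morph _ (mevalD v) (meval0 v)).
  move/eqP; rewrite subr_eq0 => /eqP ->.
  by apply: eq_bigr => j _; rewrite !mxE mevalM.
rewrite -HsX -[Y in (Y <= _)%N](mxrank1 k (size f)) -HM.
exact: leq_trans (mxrankM_maxr _ _) (rank_leq_row _).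
Qed.


Lemma core (W : seq 'X_{1..n}) u v (y : 'I_n) :
  uniq W -> (forall a b, a \in W -> b \in W -> (a <= b)%MM -> a = b) ->
  (forall w, w \in W -> squarefree_mon w) ->
  u \in W -> v \in W -> u != v -> (0 < u y)%N -> (0 < v y)%N ->
  ~ is_CI (JW (fun w => w \in W)).
Proof.
move=> uW anti sqf Hu Hv Huv Huy Hvy [f [[_ Hreg] HJ]].
have H1 := step1 uW anti HJ.
pose pv (w : 'X_{1..n}) : 'I_n := odflt y [pick i | (0 < w i)%N].
pose p0 := fun w : 'X_{1..n} => w y == 0%N.
pose C := y :: [seq pv w | w <- W & p0 w].
have HC : (size C < size W)%N.
  rewrite /= size_map size_filter.
  have H2 : (2 <= count (predC p0) W)%N.
    rewrite -size_filter.
    have -> : 2%N = size [:: u; v] by [].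
    apply: uniq_leq_size; first by rewrite /= inE Huv.
    move=> x; rewrite !inE => /orP[/eqP->|/eqP->]; rewrite mem_filter /= /p0 -lt0n ?Huy ?Hvy //.
  change ((count p0 W).+1 < size W)%N; have := count_predC p0 W; lia.
pose CS := [set x in C].
have covC : forall w, w \in W -> exists2 j, j \in CS & (0 < w j)%N.
  move=> w Hw; case Hwy : (0 < w y)%N.
    by exists y => //; rewrite inE mem_head.
  have Hp0 : p0 w by rewrite /p0 eqn0Ngt Hwy.
  case: (pickP (fun i => 0 < w i)%N) => [i Hi | Hnone].
    exists (pv w).
      by rewrite inE; apply/orP; right; apply/mapP; exists w => //; rewrite mem_filter Hp0.
    rewrite /pv; case: pickP => [i' Hi'|Hn] /=; first by [].
    by move: (Hn i); rewrite /= Hi.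
  exfalso; have Hwu : (w <= u)%MM.
    by apply/mnm_lepP => i; move: (Hnone i) => /= /negbT; rewrite -leqNgt leqn0 => /eqP ->.
  have Ewu := anti _ _ Hw Hu Hwu.
  by rewrite Ewu Huy in Hwy.
pose cov (Q : {set 'I_n}) := all (fun w : 'X_{1..n} => [exists j in Q, 0 < w j]%N) W.
have covCS : (CS \subset CS) && cov CS.
  rewrite subxx /=; apply/allP => w Hw; have [j Hj Hwj] := covC w Hw.
  by apply/existsP; exists j; rewrite Hj.
case: (@arg_minnP _ CS (fun Q : {set 'I_n} => (Q \subset CS) && cov Q) (fun Q : {set 'I_n} => #|Q|) covCS).
move=> PP /andP[PC covP] Pmin.
have Hcov : forall w, w \in W -> exists2 j, j \in PP & (0 < w j)%N.
  move=> w Hw; move/allP: covP => /(_ w Hw) /existsP[j /andP[Hj Hwj]].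
  by exists j.
have Hmin : forall j, j \in PP -> exists2 w, w \in W & (w <= U_(j) + mstar PP)%MM.
  move=> j Hj.
  have : ~~ cov (PP :\ j).
    apply/negP => Hc.
    have := Pmin (PP :\ j); rewrite Hc andbT (subset_trans (subsetDl PP [set j]) PC).
    by move=> /(_ isT); rewrite (cardsD1 j PP) Hj add1n ltnn.
  move=> /allPn[w Hw Hnw]; exists w => //.
  apply/mnm_lepP => i; rewrite mnmDE mnm1E mnmE.
  have Hsq : (w i <= 1)%N by move/forallP: (sqf w Hw) => /(_ i).
  case Hij : (j == i); first by apply: (leq_trans Hsq); rewrite leq_addr.
  case HiP : (i \in PP); last by apply: (leq_trans Hsq); rewrite /= addn1.
  rewrite /= addn0 leqn0 eqn0Ngt; apply/negP => Hwi.
  move/negP: Hnw; apply; apply/existsP; exists i.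
  by rewrite !inE HiP Hwi andbT eq_sym Hij.
have H2 := step2 Hreg HJ Hcov Hmin.
have H3 : (#|PP| <= size C)%N.
  apply: leq_trans (subset_leq_card PC) _; rewrite cardsE; exact: card_size.
by move: (leq_trans H1 (leq_trans H2 H3)); rewrite leqNgt HC.
Qed.


Lemma mdeg_lt (a b : 'X_{1..n}) : (a <= b)%MM -> a != b -> (mdeg a < mdeg b)%N.
Proof.
move=> Hab Hne; rewrite -(submK Hab) mdegD -{1}[mdeg a]add0n ltn_add2r lt0n mdeg_eq0.
apply: contra Hne => /eqP H; by rewrite -(submK Hab) H add0m.
Qed.

Lemma min_below (W0 : seq 'X_{1..n}) w : w \in W0 ->
  exists2 w', w' \in W0 & (w' <= w)%MM && all (fun b => (b <= w')%MM ==> (b == w')) W0.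
Proof.
have : forall d w, (mdeg w < d)%N -> w \in W0 -> exists2 w', w' \in W0 &
    (w' <= w)%MM && all (fun b => (b <= w')%MM ==> (b == w')) W0.
  elim=> [//|d IH] w' Hd Hw.
  case Hall : (all (fun b => (b <= w')%MM ==> (b == w')) W0).
    by exists w' => //; rewrite lepm_refl Hall.
  move/negbT: Hall => /allPn[b Hb].
  rewrite negb_imply => /andP[Hbw Hne].
  have Hdeg : (mdeg b < d)%N by apply: leq_trans (mdeg_lt Hbw Hne) _.
  have [w'' Hw'' /andP[H1 H2]] := IH b Hdeg Hb.
  by exists w'' => //; rewrite (lepm_trans H1 Hbw) H2.
by move=> H Hw; apply: (H (mdeg w).+1).
Qed.

End Ideals.

Section Main.
Variables (k : fieldType) (n : nat).
Local Notation S := {mpoly k[n]}.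

Definition ismin (G : seq 'X_{1..n}) m := all (fun g => mdiv g m ==> (g == m)) G.

Lemma minP (G : seq 'X_{1..n}) m :
  min_mon_gen (@mon_ideal k n G) m <-> (m \in G) && ismin G m.
Proof.
split.
  move=> [Hm Hmin].
  have [g Hg Hgm] := mon_memP Hm.
  have Egm : g = m by apply: Hmin; [rewrite mdivE | rewrite /mon_ideal; apply: igG; exists g].
  rewrite -Egm Hg /=; apply/allP => g' Hg'; apply/implyP => Hd.
  apply/eqP; rewrite Egm; apply: Hmin; first by rewrite -Egm.
  by rewrite /mon_ideal; apply: igG; exists g'.
move=> /andP[HmG Hmin]; split; first by rewrite /mon_ideal; apply: igG; exists m.
move=> m' Hm'm Hm'.
have [g Hg Hgm'] := mon_memP Hm'.
have Hgm : mdiv g m by rewrite mdivE; apply: lepm_trans Hgm' _; rewrite -mdivE.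
move/allP: Hmin => /(_ g Hg); rewrite Hgm /= => /eqP Egm.
by apply: lepm_anti; rewrite -?mdivE // -Egm.
Qed.

Lemma mon_set1E (x i : 'I_n) m : mon_set1 x m i = if i == x then 0%N else m i.
Proof. by rewrite /mon_set1 mnmE. Qed.

Lemma gcd_le1 (m1 m2 : 'X_{1..n}) :
  squarefree_mon m1 ->
  (forall i j : 'I_n, i != j -> (0 < minn (m1 i) (m2 i))%N ->
     (0 < minn (m1 j) (m2 j))%N -> False) ->
  (gcd_deg m1 m2 <= 1)%N.
Proof.
move=> Hsq H; rewrite /gcd_deg.
case: (pickP (fun i => 0 < minn (m1 i) (m2 i))%N) => [i Hi|H0].
  rewrite (bigD1 i) //= big1 ?addn0.
    apply: leq_trans (geq_minl _ _) _; by move/forallP: Hsq => /(_ i).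
  move=> j Hj; apply/eqP; rewrite -leqn0 leqNgt; apply/negP => Hj'.
  by apply: (H i j) => //; rewrite eq_sym.
by rewrite big1 // => i _; apply/eqP; rewrite -leqn0 leqNgt H0.
Qed.

End Main.

Theorem lemma4p1 (k : fieldType) (n : nat) (G : seq 'X_{1..n})
  (HG : forall m, m \in G -> squarefree_mon m)
  (HNCI : is_NCI (@mon_ideal k n G))
  (m1 m2 : 'X_{1..n})
  (H1 : min_mon_gen (@mon_ideal k n G) m1)
  (H2 : min_mon_gen (@mon_ideal k n G) m2)
  (H12 : m1 <> m2) :
  (gcd_deg m1 m2 <= 1)%N.
Proof.
have /andP[G1 I1] := (@minP k n G m1).1 H1.
have /andP[G2 I2] := (@minP k n G m2).1 H2.
have sq1 := HG m1 G1; have sq2 := HG m2 G2.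
apply: gcd_le1 => // x y Hxy Hx Hy.
move: Hx Hy; rewrite !leq_min => /andP[Hx1 Hx2] /andP[Hy1 Hy2].
case: HNCI => _ _ Hsupp.
have HCI := Hsupp x (ex_intro _ m1 (conj H1 Hx1)).
pose W0 := [seq mon_set1 x m | m <- G & ismin G m].
pose W := undup [seq a <- W0 | all (fun b => (b <= a)%MM ==> (b == a)) W0].
have E1 : forall p, ideal_set1 (@mon_ideal k n G) x p <-> JW (fun w => w \in W0) p.
  move=> p; apply: ig_ext => g; split.
    move=> [m Hm ->]; exists (mon_set1 x m) => //; apply: map_f.
    by have /andP[a b] := (@minP k n G m).1 Hm; rewrite mem_filter a b.
  move=> [w /mapP[m Hm ->] ->]; exists m => //; apply/(@minP k n G).
  by rewrite mem_filter in Hm; rewrite andbC.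
have E2 : forall p : {mpoly k[n]}, JW (fun w => w \in W0) p <-> JW (fun w => w \in W) p.
  move=> p; split.
    rewrite /JW; apply: ig_sub => g [w Hw ->].
    have [w' Hw' /andP[Hle Hall]] := min_below Hw.
    have HW : w' \in W by rewrite mem_undup mem_filter Hall.
    have HH := @mon_mem k n (fun w => w \in W) w' w HW Hle; exact HH.
  rewrite /JW; apply: ig_sub => g [w Hw ->]; apply: igG; exists w => //.
  by rewrite mem_undup mem_filter in Hw; case/andP: Hw.
have memW : forall m, m \in G -> ismin G m -> (0 < m x)%N -> mon_set1 x m \in W.
  move=> m Gm Im Hmx; rewrite mem_undup mem_filter; apply/andP; split; last first.
    by apply: map_f; rewrite mem_filter Im Gm.
  apply/allP => b /mapP[g Hg ->]; rewrite mem_filter in Hg; case/andP: Hg => Ig Gg.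
  apply/implyP => Hle.
  have Hgm : (g <= m)%MM.
    apply/mnm_lepP => i; case Hix : (i == x).
      move/eqP: Hix => ->; apply: leq_trans Hmx.
      by move/forallP: (HG g Gg) => /(_ x).
    by move/mnm_lepP: Hle => /(_ i); rewrite !mon_set1E Hix.
  by move/allP: Im => /(_ g Gg); rewrite mdivE Hgm /= => /eqP ->.
have uW : uniq W by apply: undup_uniq.
have anti : forall a b, a \in W -> b \in W -> (a <= b)%MM -> a = b.
  move=> a b; rewrite !mem_undup !mem_filter => /andP[_ Ha] /andP[Hb _] Hab.
  by move/allP: Hb => /(_ a Ha); rewrite Hab => /eqP.
have sqf : forall w, w \in W -> squarefree_mon w.
  move=> w; rewrite mem_undup mem_filter => /andP[_ /mapP[m Hm ->]].
  rewrite mem_filter in Hm; case/andP: Hm => _ Gm.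
  apply/forallP => i; rewrite mon_set1E; case: (i == x) => //.
  by move/forallP: (HG m Gm) => /(_ i).
have Huv : mon_set1 x m1 != mon_set1 x m2.
  apply/eqP => E; apply: H12; apply/mnmP => i.
  have := congr1 (fun m : 'X_{1..n} => m i) E; rewrite /= !mon_set1E.
  case: eqP => [->|//] _.
  have e1 : m1 x = 1%N by apply/eqP; rewrite eqn_leq Hx1 andbT; move/forallP: sq1 => /(_ x).
  have e2 : m2 x = 1%N by apply/eqP; rewrite eqn_leq Hx2 andbT; move/forallP: sq2 => /(_ x).
  by rewrite e1 e2.
have Hyx : (y == x) = false by rewrite eq_sym; apply/negbTE.
apply: (@core k n W (mon_set1 x m1) (mon_set1 x m2) y uW anti sqf
   (memW _ G1 I1 Hx1) (memW _ G2 I2 Hx2) Huv); rewrite ?mon_set1E ?Hyx //.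
case: HCI => f [Hf Hfp]; exists f; split => // p.
by split => [/E2/E1/Hfp | /Hfp/E1/E2].
Qed.
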